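(* Let $R$ be a ring, let $(X_*,d)$ be a chain complex of left $R$-modules with decompositions $X_n=\bigoplus_{i\in I_n}X_{n,i}$, let $Q$ be its weighted quiver, and let $\mathcal M$ be a partial matching of $Q$. Suppose that for each vertex $(n,i)$ of $Q^{\mathcal M}$, every zigzag path in $Q^{\mathcal M}$ starting at $(n,i)$ has finite length; that is, there is no infinite zigzag path. Then $\mathcal M$ is a Morse matching.
   Context: Write $d_{n,ji}:X_{n,i}\to X_{n-1,j}$ ($i\in I_n$, $j\in I_{n-1}$) for the components of $d_n$. The weighted quiver $Q$ has vertices the pairs $(n,i)$ with $n\in\mathbb Z$, $i\in I_n$. For each pair with $d_{n,ji}\neq0$ it has one arrow $(n,i)\to(n-1,j)$, of weight $d_{n,ji}$. A partial matching is a set $\mathcal M$ of arrows of $Q$ such that - every vertex is incident to at most one arrow of $\mathcal M$, and - the weight of each arrow of $\mathcal M$ is an isomorphism of modules. The quiver $Q^{\mathcal M}$ is obtained from $Q$ as follows: - each arrow not in $\mathcal M$ is kept, with its weight, and called thick; - each arrow $(n,i)\to(n-1,j)$ in $\mathcal M$ is replaced by a dotted arrow $(n-1,j)\to(n,i)$ of weight $-d_{n,ji}^{-1}$. A zigzag path is a path in $Q^{\mathcal M}$ whose arrows alternate between dotted and thick. For a finite path $p$, $\varphi^{\mathcal M}_p$ denotes the composition of the weights of its arrows, in the order of the path. Let $\mathcal V_n=\{(n,i):i\in I_n\}$ and let $\mathcal D_n\subseteq\mathcal V_n$ be the set of targets of arrows of $\mathcal M$ in $Q$. For $(n,i)\in\mathcal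 D_n$ and $(n,j)\in\mathcal V_n$, let $\mathrm{Path}_1^{\mathcal M}((n,i),(n,j))$ be the set of zigzag paths from $(n,i)$ to $(n,j)$ beginning with a dotted arrow. A Morse matching is a partial matching satisfying the following local finiteness hypothesis. For every $(n,i)\in\mathcal D_n$ and every $x\in X_{n,i}$: - for every $(n,j)\in\mathcal V_n$ the sum $\sum_{p\in\mathrm{Path}_1^{\mathcal M}((n,i),(n,j))}\varphi^{\mathcal M}_p(x)$ exists (for instance, it is a finite sum); - only finitely many $(n,j)\in\mathcal V_n$ have this sum nonzero. *)

(* Defs.v *)
From HB Require Import structures.
From mathcomp Require Import all_boot all_order all_algebra.
From Stdlib Require Import ClassicalEpsilon.
From Stdlib Require List.
Unset Implicit Arguments.
Import GRing.Theory.
Local Open Scope ring_scope.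

(* Conventions:
   - degrees are integers; I n is the index set of the decomposition of X_n;
   - the differential is indexed by its *target* degree:
       d n k j : X_{n+1,k} -> X_{n,j}   (the component d_{n+1,jk});
   - a matching M is a predicate on arrows (n,k,j) : (n+1,k) -> (n,j) of Q. *)

Section MorseDefs.
Variable R : pzRingType.
Variable I : int -> Type.
Variable X : forall n : int, I n -> lmodType R.
Variable d : forall (n : int) (k : I (n + 1)) (j : I n),
  {linear X (n + 1) k -> X n j}.

(* inverse of a map (the genuine inverse when the map is bijective) *)
Definition finv (A B : lmodType R) (f : A -> B) (y : B) : A :=
  epsilon (inhabits (0 : A)) (fun x => f x = y).

(* d_{n+1}(x) lies in the direct sum: finitely many nonzero components *)
Definition locally_finite_diff : Prop :=
  forall n (k : I (n + 1)) (x : X (n + 1) k),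
    exists s : seq (I n), forall j, d n k j x <> 0 -> List.In j s.

(* d_n o d_{n+1} = 0, componentwise *)
Definition chain_complex_cond : Prop :=
  forall n (k : I (n + 1 + 1)) (x : X (n + 1 + 1) k) (l : I n)
         (s : seq (I (n + 1))),
    List.NoDup s -> (forall j, d (n + 1) k j x <> 0 -> List.In j s) ->
    \sum_(j <- s) d n j l (d (n + 1) k j x) = 0.

Definition is_arrow n (k : I (n + 1)) (j : I n) : Prop :=
  exists x, d n k j x <> 0.

Variable M : forall n : int, I (n + 1) -> I n -> Prop.

Definition vtx := {n : int & I n}.

Definition partial_matching : Prop :=
  (forall n k j, M n k j -> is_arrow n k j /\ bijective (fun x => d n k j x)) /\
  (forall n k j n' k' j', M n k j -> M n' k' j' ->
     (existT I (n + 1) k = existT I (n' + 1) k' \/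
      existT I n j = existT I n' j' \/
      existT I (n + 1) k = existT I n' j' \/
      existT I n j = existT I (n' + 1) k') ->
     existT (fun m : int => (I (m + 1) * I m)%type) n (k, j) =
     existT (fun m : int => (I (m + 1) * I m)%type) n' (k', j')).

(* arrows of Q^M: qdot = true for dotted (reversed matched) arrows *)
Record qarrow := QArrow { qn : int; qk : I (qn + 1); qj : I qn; qdot : bool }.

Definition thick n (k : I (n + 1)) (j : I n) : Prop := is_arrow n k j /\ ~ M n k j.

Definition qvalid (a : qarrow) : Prop :=
  if qdot a then M (qn a) (qk a) (qj a) else thick (qn a) (qk a) (qj a).

Definition qsrc (a : qarrow) : vtx :=
  if qdot a then existT I (qn a) (qj a) else existT I (qn a + 1) (qk a).
Definition qtgt (a : qarrow) : vtx :=
  if qdot a then existT I (qn a + 1) (qk a) else existT I (qn a) (qj a).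

Definition infinite_zigzag (p : nat -> qarrow) : Prop :=
  (forall t, qvalid (p t)) /\
  (forall t, qtgt (p t) = qsrc (p t.+1)) /\
  (forall t, qdot (p t.+1) = ~~ qdot (p t)).

Definition no_infinite_zigzag : Prop :=
  forall (v : vtx) (p : nat -> qarrow), infinite_zigzag p -> qsrc (p 0) = v -> False.

(* Zigzag paths from (n,j0) to (n,j) beginning with a dotted arrow:
   (n,j0) ..> (n+1,k1) -> (n,j1) ..> ... ..> (n+1,km) -> (n,j),
   encoded by the list [(k1,j1);...;(k_{m-1},j_{m-1})] and the last km. *)
Fixpoint zz_valid (n : int) (j : I n) (j0 : I n) (p : seq (I (n + 1) * I n))
    (km : I (n + 1)) {struct p} : Prop :=
  match p with
  | [::] => M n km j0 /\ thick n km j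
  | (k, j') :: p' => M n k j0 /\ thick n k j' /\ zz_valid n j j' p' km
  end.

Fixpoint zz_val (n : int) (j : I n) (j0 : I n) (p : seq (I (n + 1) * I n))
    (km : I (n + 1)) {struct p} : X n j0 -> X n j :=
  match p with
  | [::] => fun x => d n km j (- finv (X (n + 1) km) (X n j0) (fun y => d n km j0 y) x)
  | (k, j') :: p' => fun x => zz_val n j j' p' km (d n k j' (- finv (X (n + 1) k) (X n j0) (fun y => d n k j0 y) x))
  end.

Definition zz_path (n : int) := (seq (I (n + 1) * I n) * I (n + 1))%type.

(* y is the (existing, finitely supported) sum over Path_1((n,i),(n,j)) of phi_p(x) *)
Definition zz_sum n (i j : I n) (x : X n i) (y : X n j) : Prop :=
  exists L : seq (zz_path n),
    List.NoDup L /\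
    (forall q, List.In q L -> zz_valid n j i q.1 q.2) /\
    (forall q, zz_valid n j i q.1 q.2 -> zz_val n j i q.1 q.2 x <> 0 -> List.In q L) /\
    y = \sum_(q <- L) zz_val n j i q.1 q.2 x.

Definition morse_matching : Prop :=
  partial_matching /\
  forall n (i : I n), (exists k : I (n + 1), M n k i) -> forall x : X n i,
    (forall j : I n, exists y, zz_sum n i j x y) /\
    exists S : seq (I n), forall (j : I n) (y : X n j), zz_sum n i j x y -> y <> 0 -> List.In j S.

End MorseDefs.

(* Main.v *)
Require Import Defs.
From HB Require Import structures.
From mathcomp Require Import all_boot all_order all_algebra.
From Stdlib Require Import ClassicalEpsilon Classical Eqdep_dec.
From Stdlib Require List.
Import GRing.Theory.

Lemma dedup_filter (T : Type) (P : T -> Prop) (s : seq T) :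
  exists s', List.NoDup s' /\ (forall x, List.In x s' -> P x) /\
             (forall x, List.In x s -> P x -> List.In x s').
Proof.
elim: s => [|a s [s' [Hnd [HP Hc]]]].
  exists [::]; split; first exact: List.NoDup_nil.
  by split => x [].
case: (classic (P a /\ ~ List.In a s')) => [[Pa Na]|H].
- exists (a :: s'); split; first exact: List.NoDup_cons.
  split; first by move=> x [<-|Hx] //; apply: HP.
  move=> x [<-|Hx] Px; [by left | right; exact: Hc].
- exists s'; split=> //; split=> // x [<-|Hx] Px; last exact: Hc.
  by apply: NNPP => Hn; apply: H.
Qed.

Lemma sum0_seq (T : Type) (V : zmodType) (L : seq T) (F : T -> V) :
  (forall q, List.In q L -> F q = 0%R) -> (\sum_(q <- L) F q)%R = 0%R.
Proof.
elim: L => [|a L IH] H; first by rewrite big_nil.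
rewrite big_cons H; last by left.
rewrite IH ?add0r // => q Hq; apply: H; by right.
Qed.

Section Pf.
Variable R : pzRingType.
Variable I : int -> Type.
Variable X : forall n : int, I n -> lmodType R.
Variable d : forall (n : int) (k : I (n + 1)%R) (j : I n),
  {linear X (n + 1)%R k -> X n j}.
Variable M : forall n : int, I (n + 1)%R -> I n -> Prop.
Hypothesis Hlf : locally_finite_diff R I X d.
Hypothesis Hpm : partial_matching R I X d M.
Hypothesis Hnz : no_infinite_zigzag R I X d M.

Lemma finv0 n k j : M n k j ->
  Defs.finv R (X (n+1)%R k) (X n j) (fun y => d n k j y) 0%R = 0%R.
Proof.
move=> Hm. have [_ [g gK _]] := (proj1 Hpm) n k j Hm.
rewrite /Defs.finv.
set P := (fun x => _ = _).
have : P (epsilon (inhabits 0%R) P).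
  apply: epsilon_spec. exists 0%R; by rewrite /P raddf0.
rewrite /P => H.
by rewrite -[epsilon _ _]gK H -(raddf0 (d n k j)) gK.
Qed.

Lemma M_uniq n k k' j : M n k j -> M n k' j -> k = k'.
Proof.
move=> H1 H2.
have := (proj2 Hpm) n k j n k' j H1 H2 (or_intror (or_introl erefl)).
move/(inj_pair2_eq_dec _ (@eq_comparable int) (fun m : int => (I (m + 1)%R * I m)%type)). by case.
Qed.

Lemma zz_val0 n j j0 p km : zz_valid R I X d M n j j0 p km ->
  zz_val R I X d n j j0 p km 0%R = 0%R.
Proof.
elim: p j0 => [|[k j'] p IH] j0 /=.
- by move=> [Hm _]; rewrite finv0 // oppr0 raddf0.
- by move=> [Hm [_ Hv]]; rewrite finv0 // oppr0 raddf0 IH.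
Qed.

Definition succ n (j' j0 : I n) := exists k, M n k j0 /\ thick R I X d M n k j'.

Lemma nacc_step n j : ~ Acc (succ n) j ->
  exists k j', M n k j /\ thick R I X d M n k j' /\ ~ Acc (succ n) j'.
Proof.
move=> H; apply: NNPP => H'; apply: H; constructor=> j' [k [Hm Ht]].
apply: NNPP => Hna; apply: H'; by exists k, j'.
Qed.

Lemma all_acc n j : Acc (succ n) j.
Proof.
apply: NNPP => H0.
pose S := {j : I n | ~ Acc (succ n) j}.
have step : forall s : S, {kj : I (n+1)%R * S |
     M n kj.1 (sval s) /\ thick R I X d M n kj.1 (sval kj.2)}.
  move=> [j1 H1]. apply: constructive_indefinite_description.
  have [k [j' [Hm [Ht Ha]]]] := nacc_step n j1 H1. by exists (k, exist _ j' Ha).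
pose a := fun t => iter t (fun s => (sval (step s)).2) (exist _ j H0).
pose kk := fun t => (sval (step (a t))).1.
pose p := fun t : nat => if odd t then QArrow I n (kk t./2) (sval (a (t./2).+1)) false
                                   else QArrow I n (kk t./2) (sval (a t./2)) true.
apply: (Hnz (qsrc I (p 0%N)) p) => //.
have Hh : forall t, t.+1./2 = (odd t + t./2)%N by move=> t; rewrite -uphalfE uphalf_half.
split; [|split].
- move=> t; rewrite /p; case: (odd t) => /=.
  + exact: (proj2 (svalP (step (a t./2)))).
  + exact: (proj1 (svalP (step (a t./2)))).
- move=> t; rewrite /p oddS Hh; by case: (odd t).
- move=> t; rewrite /p oddS; by case: (odd t).
Qed.

Lemma cover_C n j (j0 : I n) : forall v : X n j0, exists L : seq (zz_path I n),
  forall p km, zz_valid R I X d M n j j0 p km ->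
     zz_val R I X d n j j0 p km v <> 0%R -> List.In (p, km) L.
Proof.
elim: (all_acc n j0) => {}j0 _ IH v.
case: (classic (exists k, M n k j0)) => [[k0 Hk0]|Hno]; last first.
  exists [::] => -[|[k j'] p] km /= [Hm _]; case: Hno; [by exists km | by exists k].
set w := (- Defs.finv R (X (n+1)%R k0) (X n j0) (fun y => d n k0 j0 y) v)%R.
have [s Hs] := Hlf n k0 w.
have [L' HL'] : exists L', forall j' p km, List.In j' s -> thick R I X d M n k0 j' ->
    zz_valid R I X d M n j j' p km -> zz_val R I X d n j j' p km (d n k0 j' w) <> 0%R ->
    List.In ((k0,j')::p, km) L'.
  elim: (s) => [|b s' [Ls HLs]]; first by exists [::].
  case: (classic (thick R I X d M n k0 b)) => Hta.
  - have [La HLa] := IH b (ex_intro _ k0 (conj Hk0 Hta)) (d n k0 b w).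
    exists (List.app (List.map (fun q : zz_path I n => ((k0,b)::q.1, q.2)) La) Ls)
      => j' p km [Eb|Hin] Ht Hv Hn; apply/List.in_or_app.
    + subst b; left.
      apply: (List.in_map (fun q : zz_path I n => ((k0,j')::q.1, q.2)) La (p,km)).
      exact: HLa.
    + right; exact: HLs.
  - exists Ls => j' p km [Eb|Hin] Ht; [by subst b | exact: HLs].
exists (([::], k0) :: L') => -[|[k j'] p] km /=.
- move=> [Hm _] _. by rewrite (M_uniq _ _ _ _ Hm Hk0); left.
- move=> [Hm [Ht Hv]] Hn. right. have Ek := M_uniq _ _ _ _ Hm Hk0. subst k.
  apply: HL' => //. apply: Hs => Hz. apply: Hn. rewrite -/w Hz. exact: zz_val0.
Qed.

Lemma cover_D n (j0 : I n) : forall v : X n j0, exists S : seq (I n),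
  forall j p km, zz_valid R I X d M n j j0 p km ->
     zz_val R I X d n j j0 p km v <> 0%R -> List.In j S.
Proof.
elim: (all_acc n j0) => {}j0 _ IH v.
case: (classic (exists k, M n k j0)) => [[k0 Hk0]|Hno]; last first.
  exists [::] => j -[|[k j'] p] km /= [Hm _]; case: Hno; [by exists km | by exists k].
set w := (- Defs.finv R (X (n+1)%R k0) (X n j0) (fun y => d n k0 j0 y) v)%R.
have [s Hs] := Hlf n k0 w.
have [L' HL'] : exists L', forall j' j p km, List.In j' s -> thick R I X d M n k0 j' ->
    zz_valid R I X d M n j j' p km -> zz_val R I X d n j j' p km (d n k0 j' w) <> 0%R ->
    List.In j L'.
  elim: (s) => [|b s' [Ls HLs]]; first by exists [::].
  case: (classic (thick R I X d M n k0 b)) => Hta.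
  - have [La HLa] := IH b (ex_intro _ k0 (conj Hk0 Hta)) (d n k0 b w).
    exists (List.app La Ls) => j' j p km [Eb|Hin] Ht Hv Hn; apply/List.in_or_app.
    + subst b; left; exact: (HLa j p km).
    + right; exact: (HLs j' j p km).
  - exists Ls => j' j p km [Eb|Hin] Ht; [by subst b | exact: HLs].
exists (List.app s L') => j -[|[k j'] p] km /=.
- move=> [Hm _] Hn; apply/List.in_or_app. left. have Ek := M_uniq _ _ _ _ Hm Hk0. subst km. exact: Hs.
- move=> [Hm [Ht Hv]] Hn; apply/List.in_or_app. right. have Ek := M_uniq _ _ _ _ Hm Hk0. subst k.
  apply: (HL' j' j p km) => //. apply: Hs => Hz. apply: Hn. rewrite -/w Hz. exact: zz_val0.
Qed.

End Pf.

Theorem proposition3p2 (R : pzRingType) (I : int -> Type)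
  (X : forall n : int, I n -> lmodType R)
  (d : forall (n : int) (k : I (n + 1)%R) (j : I n),
         {linear X (n + 1)%R k -> X n j})
  (M : forall n : int, I (n + 1)%R -> I n -> Prop) :
  locally_finite_diff R I X d -> chain_complex_cond R I X d ->
  partial_matching R I X d M -> no_infinite_zigzag R I X d M ->
  morse_matching R I X d M.
Proof.
move=> Hlf _ Hpm Hnz. split => // n i [k Hk] x. split.
- move=> j. have [L HL] := cover_C R I X d M Hlf Hpm Hnz n j i x.
  have [L' [Hnd [Hv Hc]]] :=
    dedup_filter _ (fun q : zz_path I n => zz_valid R I X d M n j i q.1 q.2) L.
  exists (\sum_(q <- L') zz_val R I X d n j i q.1 q.2 x)%R, L'.
  split=> //; split=> //; split=> // -[p km] /= Hq Hn.
  apply: Hc => //. exact: HL.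
- have [S HS] := cover_D R I X d M Hlf Hpm Hnz n i x. exists S => j y [L [_ [Hv [_ ->]]]] Hy.
  apply: NNPP => Hn. apply: Hy. apply: (sum0_seq _ _ _ (fun q => zz_val R I X d n j i q.1 q.2 x)) => -[p km] Hin.
  apply: NNPP => Hz. apply: Hn. apply: (HS j p km) => //. exact: (Hv (p,km) Hin).
Qed.
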